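(* Let $\mu$ be a symmetric measure on $L_n$ with $C^0_\mu<3$, and write $a_j=\mu(j)$. Then $a_i<a_j<\frac{j}{i}a_i$ for all $1\le i<j\le\lceil n/2\rceil$.
   Context: $L_n$ is the path graph with vertices $\{1,\dots,n\}$ and edges $\{j,j+1\}$, with distance $|i-j|$. A measure on $L_n$ is a weight function $\mu:\{1,\dots,n\}\to(0,\infty)$, $\mu(A)=\sum_{v\in A}\mu(v)$; it is symmetric if $\mu(j)=\mu(n+1-j)$ for all $j$. $B(x,r)=\{y:|x-y|\le r\}$ and $C^0_\mu=\max_{1\le x\le n}\mu(B(x,1))/\mu(x)$. *)

(* Defs.v *)
From mathcomp Require Import all_boot all_order all_algebra.
Set Implicit Arguments. Unset Strict Implicit. Unset Printing Implicit Defensive.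
Import Order.TTheory GRing.Theory Num.Theory.
Local Open Scope ring_scope.

(* The path graph L_n has vertex set {1,...,n} (as naturals) and distance |i-j|. *)
Definition dist_L (i j : nat) : nat := ((i - j) + (j - i))%N.

(* A measure on L_n: mu : nat -> R, positive on {1..n} (values outside ignored). *)
Definition is_measure_L (R : realFieldType) (n : nat) (mu : nat -> R) : Prop :=
  forall v : nat, (1 <= v <= n)%N -> 0 < mu v.

Definition symmetric_L (R : realFieldType) (n : nat) (mu : nat -> R) : Prop :=
  forall j : nat, (1 <= j <= n)%N -> mu j = mu (n.+1 - j)%N.

Definition ball_mass (R : realFieldType) (n : nat) (mu : nat -> R) (x r : nat) : R :=
  \sum_(1 <= y < n.+1 | (dist_L x y <= r)%N) mu y.

(* C^0_mu < c  iff  max_{1<=x<=n} mu(B(x,1))/mu(x) < c ; for n >= 1 the max exists. *)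
Definition C0_lt (R : realFieldType) (n : nat) (mu : nat -> R) (c : R) : Prop :=
  forall x : nat, (1 <= x <= n)%N -> ball_mass n mu x 1 / mu x < c.

(* Main.v *)
Require Import Defs.
From mathcomp Require Import all_boot all_order all_algebra.
From mathcomp Require Import zify ring lra.
Import Order.TTheory GRing.Theory Num.Theory.
Local Open Scope ring_scope.

Lemma sum2 (R : realFieldType) (F : nat -> R) lo hi x :
  (forall k, (lo <= k < hi)%N -> 0 <= F k) -> (lo <= x)%N -> (x + 2 <= hi)%N ->
  F x + F x.+1 <= \sum_(lo <= k < hi) F k.
Proof.
move=> H0 H1 H2.
rewrite (@big_cat_nat _ _ _ x lo hi) //=; last by lia.
rewrite (@big_cat_nat _ _ _ (x+2) x hi) /=; [|lia|lia].
have -> : \sum_(x <= i < x+2) F i = F x + F x.+1.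
  by rewrite addn2 big_ltn; [rewrite big_ltn; [rewrite big_geq // addr0|lia]|lia].
have A : 0 <= \sum_(lo <= i < x) F i.
  by rewrite big_nat_cond; apply: sumr_ge0 => k /andP[Hk _]; apply: H0; lia.
have B : 0 <= \sum_(x+2 <= i < hi) F i.
  by rewrite big_nat_cond; apply: sumr_ge0 => k /andP[Hk _]; apply: H0; lia.
lra.
Qed.

Lemma sum3 (R : realFieldType) (F : nat -> R) lo hi x :
  (forall k, (lo <= k < hi)%N -> 0 <= F k) -> (lo <= x)%N -> (x + 3 <= hi)%N ->
  F x + F x.+1 + F x.+2 <= \sum_(lo <= k < hi) F k.
Proof.
move=> H0 H1 H2.
rewrite (@big_cat_nat _ _ _ x lo hi) //=; last by lia.
rewrite (@big_cat_nat _ _ _ (x+3) x hi) /=; [|lia|lia].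
have -> : \sum_(x <= i < x+3) F i = F x + F x.+1 + F x.+2.
  by rewrite addn3 big_ltn; [rewrite big_ltn; [rewrite big_ltn; [rewrite big_geq // addr0 addrA|lia]|lia]|lia].
have A : 0 <= \sum_(lo <= i < x) F i.
  by rewrite big_nat_cond; apply: sumr_ge0 => k /andP[Hk _]; apply: H0; lia.
have B : 0 <= \sum_(x+3 <= i < hi) F i.
  by rewrite big_nat_cond; apply: sumr_ge0 => k /andP[Hk _]; apply: H0; lia.
lra.
Qed.

Lemma chain (R : realFieldType) (f : nat -> R) lo hi :
  (forall k, (lo <= k)%N -> (k.+1 <= hi)%N -> f k < f k.+1) ->
  forall p q, (lo <= p)%N -> (p < q)%N -> (q <= hi)%N -> f p < f q.
Proof.
move=> H p q Hp; elim: q => // q IH Hpq Hq.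
have Hk := H q (leq_trans Hp (Hpq : p <= q)%N) Hq.
case: (ltnP p q) => Hpq'.
  by apply: lt_trans (IH Hpq' (ltnW Hq)) Hk.
by have -> : p = q by lia.
Qed.

Lemma uphalf_le n : (2 * uphalf n <= n.+1)%N.
Proof.
rewrite uphalf_half; have := odd_double_half n; rewrite -muln2.
by case: (odd n) => /=; lia.
Qed.

Theorem lemma3p4 (R : realFieldType) (n : nat) (mu : nat -> R) :
  is_measure_L n mu -> symmetric_L n mu -> C0_lt n mu 3 ->
  forall i j : nat, (1 <= i)%N -> (i < j)%N -> (j <= uphalf n)%N ->
    mu i < mu j /\ mu j < (j%:R / i%:R) * mu i.
Proof.
move=> Hpos Hsym HC i j Hi Hij Hjm.
have Hm := uphalf_le n.
have Hball : forall x, (1 <= x <= n)%N -> ball_mass n mu x 1 < 3 * mu x.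
  by move=> x Hx; have := HC x Hx; rewrite ltr_pdivrMr ?Hpos // mulrC.
have Fnn : forall x k, (1 <= k < n.+1)%N ->
    0 <= (if (dist_L x k <= 1)%N then mu k else 0).
  move=> x k Hk; case: ifP => // _; apply: ltW; apply: Hpos; lia.
have Hconc : forall k, (1 <= k)%N -> (k + 2 <= n)%N -> mu k + mu k.+2 < 2 * mu k.+1.
  move=> k Hk Hkn.
  have Hb := Hball k.+1 ltac:(lia).
  have := @sum3 R (fun y => if (dist_L k.+1 y <= 1)%N then mu y else 0) 1 n.+1 k
     (Fnn k.+1) Hk ltac:(lia).
  have D1 : (dist_L k.+1 k <= 1)%N by rewrite /dist_L; lia.
  have D2 : (dist_L k.+1 k.+1 <= 1)%N by rewrite /dist_L; lia.
  have D3 : (dist_L k.+1 k.+2 <= 1)%N by rewrite /dist_L; lia.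
  rewrite /= D1 D2 D3 -big_mkcond => H.
  rewrite /ball_mass in Hb. lra.
have Hconc1 : (2 <= n)%N -> mu 2 < 2 * mu 1.
  move=> Hn.
  have Hb := Hball 1%N ltac:(lia).
  have := @sum2 R (fun y => if (dist_L 1 y <= 1)%N then mu y else 0) 1 n.+1 1
     (Fnn 1%N) (leqnn 1) ltac:(lia).
  have D2 : (dist_L 1 1 <= 1)%N by rewrite /dist_L; lia.
  have D3 : (dist_L 1 2 <= 1)%N by rewrite /dist_L; lia.
  rewrite /= ?D2 ?D3 -big_mkcond => H.
  rewrite /ball_mass in Hb. lra.
have He : forall k, (1 <= k)%N -> (k.+1 <= n.-1)%N ->
    - (mu k.+1 - mu k) < - (mu k.+2 - mu k.+1).
  move=> k Hk Hkn; have := Hconc k Hk ltac:(lia); lra.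
have Hpos_e : forall x, (1 <= x)%N -> (x.+1 <= uphalf n)%N -> mu x < mu x.+1.
  move=> x Hx Hxm.
  have := @chain _ _ _ _ He x (n - x) Hx (_ : (x < n - x)%N) (_ : (n - x <= n.-1)%N).
  have -> : (n - x).+1 = (n.+1 - x)%N by lia.
  rewrite -Hsym; last by lia.
  have -> : (n - x = n.+1 - x.+1)%N by lia.
  rewrite -Hsym; last by lia.
  move=> H; have {}H := H ltac:(lia) ltac:(lia); have : 0 < mu x.+1 - mu x by lra.
  by rewrite subr_gt0.
split.
  exact: (@chain _ _ _ _ Hpos_e i j Hi Hij Hjm).
have Hq : forall k, (1 <= k)%N -> (k.+1 <= n)%N -> k%:R * mu k.+1 < k.+1%:R * mu k.
  elim=> // k IH Hk Hkn.
  case: k IH Hk Hkn => [_ _ Hkn | k IH _ Hkn].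
    by rewrite mul1r; have := Hconc1 Hkn; lra.
  have IH' := IH (ltn0Sn k) (ltnW Hkn).
  have Hc := Hconc k.+1 (ltn0Sn k) ltac:(lia).
  rewrite -[k.+3]addn1 -[k.+2]addn1 -[k.+1]addn1 !natrD in IH' Hc *.
  have Hk1 : 0 <= k%:R :> R by [].
  nra.
have Hg : forall k, (1 <= k)%N -> (k.+1 <= n)%N ->
    - (mu k / k%:R) < - (mu k.+1 / k.+1%:R).
  move=> k Hk Hkn; rewrite ltrN2.
  have Hk0 : 0 < k%:R :> R by rewrite ltr0n.
  have Hk1 : 0 < k.+1%:R :> R by rewrite ltr0n.
  rewrite ltr_pdivrMr // mulrAC ltr_pdivlMr //.
  by have := Hq k Hk Hkn; rewrite mulrC [_ * mu k]mulrC.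
have := @chain _ _ _ _ Hg i j Hi Hij (ltac:(lia) : (j <= n)%N).
rewrite ltrN2 => H.
have Hi0 : 0 < i%:R :> R by rewrite ltr0n; lia.
have Hj0 : 0 < j%:R :> R by rewrite ltr0n; lia.
have -> : mu j = (mu j / j%:R) * j%:R by field; lra.
have -> : j%:R / i%:R * mu i = (mu i / i%:R) * j%:R by field; lra.
by rewrite ltr_pM2r.
Qed.
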